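(* For $\varsigma\in[\tfrac14,\tfrac12]$ and $\nu\in(0,1)$ let $$\hat M(\varsigma,\nu):=\begin{pmatrix}-\frac23\varsigma\log^3\nu+\frac12 & -\nu & \frac12\nu^2\\ -\nu & -\frac23(1-2\varsigma)\log^3\nu+2(1+\log\nu) & -\nu\\ \frac12\nu^2 & -\nu & -\frac23\varsigma\log^3\nu+\frac12\end{pmatrix}.$$ Two of the three eigenvalues of $\hat M(\varsigma,\nu)$ are nonnegative for all $\nu\in(0,1)$ and $\varsigma\in[\tfrac14,\tfrac12]$. The third eigenvalue is $E_3(\varsigma,\nu):=\frac1{12}\big(e_1(\varsigma,\nu)-\sqrt{e_2(\varsigma,\nu)}\big)$, where $$e_1=15+3\nu^2+(12-4\log^2\nu+4\varsigma\log^2\nu)\log\nu,$$ $$\begin{aligned}e_2=\;&81+234\nu^2+9\nu^4+216\log\nu-72\nu^2\log\nu+144\log^2\nu-72\log^3\nu+24\nu^2\log^3\nu-96\log^4\nu+16\log^6\nu\\&+(216\log^3\nu-72\nu^2\log^3\nu+288\log^4\nu-96\log^6\nu)\varsigma+144\log^6\nu\,\varsigma^2,\end{aligned}$$ and $E_3(\varsigma,\nu)\ge0$ if and only if $\varsigma\le\varsigma_2(\nu)$, where $$\varsigma_2(\nu):=\frac{1}{16\log^6\nu}\big(f(\nu)+\sqrt{g(\nu)}\big),\quad f(\nu):=\big(6(-1+\nu^2)+4(-3+\log^2\nu)\log\nu\big)\log^3\nu,$$ $$g(\nu):=96\log^6\nu\big(3(1-\nu^2)+3(1+\nu^2)\l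og\nu-(1+\nu^2)\log^3\nu\big)+\big(6(-1+\nu^2)\log^3\nu+4(\log^2\nu-3)\log^4\nu\big)^2.$$
   Context: This is the case $c_u=c_v$ for the monolayer: with $c_0,c_u,c_v\ge0$ not all zero, $\varsigma=\frac{c_v+c_0}{2(c_0+c_u+c_v)}$ and $\nu=e^{-2\pi\delta_m/L}$, $\delta_m=(\tfrac32(c_0+c_u+c_v))^{1/3}$; the assumption $c_u=c_v$ forces $\varsigma\in[\tfrac14,\tfrac12]$. The matrix $\hat M$ represents (up to the factor $L/\pi$) the first Fourier mode of the second variation of the energy at the monolayer. *)

(* Defs.v *)
From HB Require Import structures.
From mathcomp Require Import all_boot all_order all_algebra.
From mathcomp Require Import all_classical all_reals.
From mathcomp Require Import exp.
Set Implicit Arguments. Unset Strict Implicit. Unset Printing Implicit Defensive.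
Import Order.TTheory GRing.Theory Num.Theory.
Local Open Scope ring_scope.

Section Defs.
Variable R : realType.

Definition Mhat (s nu : R) : 'M[R]_3 :=
  let L := ln nu in
  let rows : seq (seq R) :=
    [:: [:: -(2/3) * s * L ^+ 3 + 1/2; - nu; (1/2) * nu ^+ 2];
        [:: - nu; -(2/3) * (1 - 2 * s) * L ^+ 3 + 2 * (1 + L); - nu];
        [:: (1/2) * nu ^+ 2; - nu; -(2/3) * s * L ^+ 3 + 1/2]] in
  \matrix_(i < 3, j < 3) nth 0 (nth [::] rows i) j.

Definition e1 (s nu : R) : R :=
  let L := ln nu in
  15 + 3 * nu ^+ 2 + (12 - 4 * L ^+ 2 + 4 * s * L ^+ 2) * L.

Definition e2 (s nu : R) : R :=
  let L := ln nu in
  81 + 234 * nu ^+ 2 + 9 * nu ^+ 4 + 216 * L - 72 * nu ^+ 2 * L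
  + 144 * L ^+ 2 - 72 * L ^+ 3 + 24 * nu ^+ 2 * L ^+ 3 - 96 * L ^+ 4
  + 16 * L ^+ 6
  + (216 * L ^+ 3 - 72 * nu ^+ 2 * L ^+ 3 + 288 * L ^+ 4 - 96 * L ^+ 6) * s
  + 144 * L ^+ 6 * s ^+ 2.

Definition E3 (s nu : R) : R := (1/12) * (e1 s nu - Num.sqrt (e2 s nu)).

Definition f_aux (nu : R) : R :=
  let L := ln nu in
  (6 * (-1 + nu ^+ 2) + 4 * (-3 + L ^+ 2) * L) * L ^+ 3.

Definition g_aux (nu : R) : R :=
  let L := ln nu in
  96 * L ^+ 6 * (3 * (1 - nu ^+ 2) + 3 * (1 + nu ^+ 2) * L
                 - (1 + nu ^+ 2) * L ^+ 3)
  + (6 * (-1 + nu ^+ 2) * L ^+ 3 + 4 * (L ^+ 2 - 3) * L ^+ 4) ^+ 2.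

Definition sigma2 (nu : R) : R :=
  (1 / (16 * ln nu ^+ 6)) * (f_aux nu + Num.sqrt (g_aux nu)).

End Defs.

(* Main.v *)
Require Import Defs.
From HB Require Import structures.
From mathcomp Require Import all_boot all_order all_algebra.
From mathcomp Require Import all_classical all_reals.
From mathcomp Require Import exp.
From mathcomp Require Import topology normedtype sequences derive realfun.
From mathcomp Require Import ring lra.
Import Order.TTheory GRing.Theory Num.Theory numFieldNormedType.Exports.
Local Open Scope ring_scope.

Lemma det33 (R : comNzRingType) (a : nat -> nat -> R) :
  \det (\matrix_(i < 3, j < 3) a i j) = a 0 0 * (a 1 1 * a 2 2 - a 1 2 * a 2 1) - a 0 1 * (a 1 0 * a 2 2 - a 1 2 * a 2 0)
         + a 0 2 * (a 1 0 * a 2 1 - a 1 1 * a 2 0).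
Proof.
rewrite (expand_det_row _ 0) !big_ord_recr big_ord0 /= /cofactor.
rewrite !(expand_det_row _ 0) !big_ord_recr !big_ord0 /= /cofactor.
rewrite !(expand_det_row _ 0) !big_ord_recr !big_ord0 /= /cofactor !det_mx00 !mxE /bump /=.
rewrite /bump /= ?add0n ?addn0 ?addn1 /= ?expr0 ?expr1 ?sqrrN1. ring.
Qed.

Lemma cp_sym (R : fieldType) (p q k n : R) :
  char_poly (\matrix_(i < 3, j < 3) nth 0 (nth [::] [:: [:: p; -n; k]; [:: -n; q; -n]; [:: k; -n; p]] i) j)
  = ('X - (p - k)%:P) * ('X^2 - (p+k+q)%:P * 'X + ((p+k)*q - 2*n^+2)%:P).
Proof.
rewrite /char_poly /char_poly_mx.
set rows := [:: [:: p; -n; k]; [:: -n; q; -n]; [:: k; -n; p]].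
have -> : 'X%:M - map_mx polyC (\matrix_(i < 3, j < 3) nth 0 (nth [::] rows i) j)
   = \matrix_(i < 3, j < 3) ('X *+ (nat_of_ord i == nat_of_ord j) - (nth 0 (nth [::] rows i) j)%:P).
  by apply/matrixP => i j; rewrite !mxE.
rewrite (@det33 _ (fun i j => 'X *+ (i == j) - (nth 0 (nth [::] rows i) j)%:P)) /= !mulr1n !mulr0n.
rewrite !(polyCD, polyCN, polyCM, polyCB).
ring.
Qed.
Section S.
Variable R : realType.
Lemma dfx (u : R) : is_derive u 1 (fun x => expR (-x)) (- expR (-u)).
Proof.
have := @is_derive1_comp R expR -%R u (expR (-u)) (-1) _ _.
rewrite mulrN1; apply.
Qed.
Definition w (u : R) := 3*(expR u - expR(-u)) - 3*u*(expR u + expR(-u)) - u^+2*(expR u - expR(-u)).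
Lemma dw (u : R) : is_derive u 1 w (-5*u*(expR u - expR(-u)) - u^+2*(expR u + expR(-u))).
Proof.
rewrite /w.
apply: is_derive_eq.
rewrite /GRing.scale /=; set e := expR u; set f := expR (-u); ring.
Qed.
Lemma contw : continuous w.
Proof. move=> x; apply/differentiable_continuous/derivable1_diffP; have [] := dw x; done. Qed.

Lemma em_sign (c : R) : c <= 0 -> 0 <= c * (expR c - expR (-c)).
Proof.
move=> c0; apply: mulr_le0 => //; rewrite subr_le0 ler_expR; lra.
Qed.

Lemma w_ge0 u : u <= 0 -> 0 <= w u.
Proof.
move=> u0.
have [c /andP[] uc c0 H] := @MVT_segment R w (fun x => -5*x*(expR x - expR(-x)) - x^+2*(expR x + expR(-x))) u 0 u0 (fun x _ => dw x) (continuous_subspaceT contw).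
have w0 : w 0 = 0 by rewrite /w oppr0 subrr !mulr0 mul0r !subr0.
move: H; rewrite w0 sub0r => H.
have h1 := @em_sign c c0.
have h2 : 0 <= c^+2 * (expR c + expR (-c)) by rewrite mulr_ge0 ?sqr_ge0 // addr_ge0 // ltW // expR_gt0.
have h3 : 0 <= 0 - u by lra.
have : (-5 * c * (expR c - expR (- c)) - c ^+ 2 * (expR c + expR (- c))) * (0 - u) <= 0.
  apply: mulr_le0_ge0 => //; rewrite -mulrA; nra.
lra.
Qed.
Definition m (u : R) := -3*(expR u - expR(-u)) + 3*u*(expR u + expR(-u)) - u^+3*(expR u + expR(-u)).
Lemma dm (u : R) : is_derive u 1 m (u * w u).
Proof.
rewrite /m /w.
apply: is_derive_eq.
rewrite /GRing.scale /=; set e := expR u; set f := expR (-u); ring.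
Qed.
Lemma contm : continuous m.
Proof. move=> x; apply/differentiable_continuous/derivable1_diffP; have [] := dm x; done. Qed.

Lemma m_ge0 u : u <= 0 -> 0 <= m u.
Proof.
move=> u0.
have [c /andP[] uc c0 H] := @MVT_segment R m (fun x => x * w x) u 0 u0 (fun x _ => dm x) (continuous_subspaceT contm).
have m0 : m 0 = 0 by rewrite /m oppr0 subrr !mulr0 mul0r expr0n /= mul0r !subr0 addr0.
move: H; rewrite m0 sub0r => H.
have h1 := @w_ge0 c c0.
have : c * w c * (0 - u) <= 0.
  apply: mulr_le0_ge0; [exact: mulr_le0_ge0 | lra].
lra.
Qed.

Lemma h_ge0 (nu : R) : 0 < nu < 1 ->
  0 <= 3 * (1 - nu ^+ 2) + 3 * (1 + nu ^+ 2) * ln nu - (1 + nu ^+ 2) * ln nu ^+ 3.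
Proof.
move=> /andP[n0 n1].
have L0 : ln nu < 0 by apply: ln_lt0; rewrite n0 n1.
have hm := @m_ge0 (ln nu) (ltW L0).
have E1 : expR (ln nu) = nu by rewrite lnK // posrE.
move: hm; rewrite /m expRN E1 => hm.
have -> : 3 * (1 - nu ^+ 2) + 3 * (1 + nu ^+ 2) * ln nu - (1 + nu ^+ 2) * ln nu ^+ 3
   = nu * (-3 * (nu - nu^-1) + 3 * ln nu * (nu + nu^-1) - ln nu ^+ 3 * (nu + nu^-1)).
  by field; rewrite gt_eqF.
exact: mulr_ge0 (ltW n0) hm.
Qed.
End S.

Theorem lemma4p12 (R : realType) (s nu : R) :
  1/4 <= s <= 1/2 -> 0 < nu < 1 ->
  exists l1 l2 : R,
    [/\ 0 <= l1, 0 <= l2,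
        char_poly (Mhat s nu)
          = ('X - l1%:P) * ('X - l2%:P) * ('X - (E3 s nu)%:P)
      & (0 <= E3 s nu <-> s <= sigma2 nu)].
Proof.
move=> /andP[s1 s2] /[dup] hnu /andP[n0 n1].
have hh := @h_ge0 R nu hnu.
have L0 : ln nu < 0 by apply: ln_lt0; rewrite n0 n1.
pose p := -(2/3) * s * ln nu ^+ 3 + 1/2.
pose q := -(2/3) * (1 - 2 * s) * ln nu ^+ 3 + 2 * (1 + ln nu).
pose k := (1/2) * nu ^+ 2 : R.
have cp : char_poly (Mhat s nu) = ('X - (p - k)%:P) * ('X^2 - (p+k+q)%:P * 'X + ((p+k)*q - 2*nu^+2)%:P).
  exact: cp_sym.
have L3 : ln nu ^+ 3 < 0.
  by rewrite !exprS expr0 mulr1 nmulr_rlt0 // nmulr_rgt0.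
have L6 : 0 < ln nu ^+ 6.
  have -> : ln nu ^+ 6 = ln nu ^+ 3 * ln nu ^+ 3 by rewrite -exprD.
  by rewrite nmulr_rgt0.
have s0 : 0 < s by lra.
have n2 : 0 < nu ^+ 2 < 1 by rewrite expr2; apply/andP; split; nra.
have pk : 0 < p + k by rewrite /p /k; nra.
have pmk : 0 <= p - k by rewrite /p /k; nra.
have e2id : e2 s nu = 36 * ((p + k - q) ^+ 2 + 8 * nu ^+ 2) by rewrite /e2 /p /q /k; field.
have e1id : e1 s nu = 6 * (p + k + q) by rewrite /e1 /p /q /k; field.
have key : g_aux nu - (16 * ln nu ^+ 6 * s - f_aux nu) ^+ 2 = 288 * ln nu ^+ 6 * ((p + k) * q - 2 * nu ^+ 2).
  by rewrite /g_aux /f_aux /p /q /k; field.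
have G0' : f_aux nu ^+ 2 <= g_aux nu.
  rewrite /g_aux /f_aux; have := mulr_ge0 (ltW L6) hh; set x := _ * _ ^+ 3; lra.
have E3E : E3 s nu = 1 / 12 * (e1 s nu - Num.sqrt (e2 s nu)) by [].
have s2E : sigma2 nu = 1 / (16 * ln nu ^+ 6) * (f_aux nu + Num.sqrt (g_aux nu)) by [].
rewrite E3E s2E cp.
have E20 : 0 <= e2 s nu by rewrite e2id; apply: mulr_ge0 => //; apply: addr_ge0; rewrite ?sqr_ge0 //; nra.
have SS : Num.sqrt (e2 s nu) ^+ 2 = e2 s nu by rewrite sqr_sqrtr.
have S0 : 0 <= Num.sqrt (e2 s nu) by apply: sqrtr_ge0.
have TT : Num.sqrt (g_aux nu) ^+ 2 = g_aux nu by rewrite sqr_sqrtr //; apply: le_trans G0'; apply: sqr_ge0.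
have T0 : 0 <= Num.sqrt (g_aux nu) by apply: sqrtr_ge0.
move: key G0' SS S0 TT T0 E20 e1id e2id.
move: (e1 s nu) (e2 s nu) (f_aux nu) (g_aux nu) (Num.sqrt (e2 s nu)) (Num.sqrt (g_aux nu)) => E1 E2 F G S T.
move=> key G0' SS S0 TT T0 E20 e1id e2id.
clearbody p q k; clear E3E s2E cp hh; set L := ln nu in L0 L3 L6 key *; clearbody L.
move: L6 key; move: (L ^+ 6) => M M0 key.
move: n2 e2id key; move: (nu ^+ 2) => N N01 e2id key.
clear L0 L3.
set det := (p + k) * q - 2 * N.
have detid : E1 ^+ 2 - E2 = 144 * det by rewrite e1id e2id /det; ring.
exists (p - k), ((E1 + S) / 12); split => //.
- have : 6 * (p + k - q) <= S.
    have : 36 * (p + k - q) ^+ 2 <= S ^+ 2 by rewrite SS e2id; nra.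
    nra.
  rewrite e1id; move=> hS; apply: divr_ge0 => //; nra.
- rewrite -mulrA; congr (_ * _).
  have -> : forall a b : R, ('X - a%:P) * ('X - b%:P) = 'X^2 - (a + b)%:P * 'X + (a * b)%:P.
    by move=> a b; rewrite polyCD polyCM; ring.
  have -> : (E1 + S) / 12 + 1 / 12 * (E1 - S) = p + k + q by rewrite e1id; field.
  have -> : (E1 + S) / 12 * (1 / 12 * (E1 - S)) = det.
    have -> : (E1 + S) / 12 * (1 / 12 * (E1 - S)) = (E1 ^+ 2 - S ^+ 2) / 144 by field.
    by rewrite SS detid; field.
  by [].
have stepA : (0 <= 1 / 12 * (E1 - S)) <-> (0 <= det).
  split => H.
  - have hSE : S <= E1 by lra.
    have : S ^+ 2 <= E1 ^+ 2 by nra.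
    rewrite SS => h2; nra.
  - have q0 : 0 < q.
      have : 0 < (p + k) * q by rewrite /det in H; nra.
      nra.
    have E1p : 0 < E1 by rewrite e1id; nra.
    have : S ^+ 2 <= E1 ^+ 2 by rewrite SS; nra.
    move=> h2; nra.
rewrite stepA.
set c := 16 * M.
have c0 : 0 < c by rewrite /c; nra.
have hX : c * (1 / c * (F + T)) = F + T by field; rewrite gt_eqF.
rewrite -[s <= _](ler_pM2l c0) hX.
have TF : F <= T by nra.
have pos : 0 < c * s - (F - T) by nra.
have key2 : (F + T - c * s) * (c * s - (F - T)) = 288 * M * det.
  rewrite -key /c -TT; ring.
split => H.
- have : 0 <= (F + T - c * s) * (c * s - (F - T)) by rewrite key2; nra.
  nra.
- have : 0 <= 288 * M * det by rewrite -key2; nra.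
  nra.
Qed.
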